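(* Let $w\in\mathbb R^n_{\ge0}$ and let $\eta$ be as defined below. Then: (i) $\eta$ is non-decreasing on $[0,n]$; (ii) $\eta(ah)\le 2a\,\eta(h)$ for all $a\ge1$ and $h\in[1,n/a]$; (iii) if $X\sim\mathrm{Bin}(m,p)$ is a binomial random variable with $1\le mp\le m\le n$, then $\mathbb E[\eta(X)]\le 3\,\eta(mp)$.
   Context: For $a\in[0,n]$, $\eta(a)$ is the expected value of $\max_{i\in R}w_i$, where $R$ is a uniformly random subset of $\{1,\dots,n\}$ of size $\lfloor a\rfloor$ (without repetition); by convention $\eta(a)=0$ for $a\in[0,1)$. *)

(* Defs.v *)
From mathcomp Require Import all_boot all_order all_algebra.
Set Implicit Arguments. Unset Strict Implicit. Unset Printing Implicit Defensive.
Import Order.TTheory GRing.Theory Num.Theory.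
Local Open Scope ring_scope.

(* eta_nat w k : expected value of max_{i in S} w_i where S is a uniformly
   random k-subset of {1..n} (here 'I_n).  The max over the empty set is 0,
   which is the convention eta = 0 on [0,1).  *)
Definition eta_nat (R : archiRealFieldType) (n : nat) (w : 'I_n -> R) (k : nat) : R :=
  (\sum_(S : {set 'I_n} | #|S| == k) \big[Num.max/0]_(i in S) w i) / ('C(n, k))%:R.

Definition eta (R : archiRealFieldType) (n : nat) (w : 'I_n -> R) (a : R) : R :=
  eta_nat w (Num.truncn a).

Definition binom_expect (R : archiRealFieldType) (m : nat) (p : R) (f : nat -> R) : R :=
  \sum_(k < m.+1) ('C(m, k))%:R * p ^+ k * (1 - p) ^+ (m - k) * f k.

(* Main.v *)
Require Import Defs.
From mathcomp Require Import all_boot all_order all_algebra.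
From mathcomp Require Import zify ring lra.
Set Implicit Arguments. Unset Strict Implicit. Unset Printing Implicit Defensive.
Import Order.TTheory GRing.Theory Num.Theory.
Lemma count_super n (S : {set 'I_n}) c : #|S| <= c <= n ->
  #|[set T : {set 'I_n} | S \subset T & #|T| == c]| = 'C(n - #|S|, c - #|S|).
Proof.
move=> /andP[h1 h2].
rewrite -(card_imset _ (@setC_inj _)) (can_imset_pre _ (@setCK _)).
have -> : (@setC _) @^-1: [set T : {set 'I_n} | S \subset T & #|T| == c] =
   [set U : {set 'I_n} | U \subset ~: S & #|U| == n - c].
  apply/setP => U; rewrite !inE subsetC.
  have := cardsC U; rewrite card_ord => e.
  congr (_ && _); apply/eqP/eqP; lia.
rewrite cards_draws cardsCs setCK card_ord -bin_sub; last lia.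
congr 'C(_,_); lia.
Qed.
Local Open Scope ring_scope.
Lemma dc (R : archiRealFieldType) n (F : {set 'I_n} -> R) a c : (a <= c <= n)%N ->
 \sum_(T : {set 'I_n} | #|T| == c) \sum_(S : {set 'I_n} | (S \subset T) && (#|S| == a)) F S
   = 'C(n - a, c - a)%:R * \sum_(S : {set 'I_n} | #|S| == a) F S.
Proof.
move=> h.
rewrite (exchange_big_dep (fun S : {set 'I_n} => #|S| == a)) /=; last by move=> ? ? _ /andP[].
rewrite mulr_sumr; apply: eq_bigr => S /eqP Sa.
rewrite (eq_bigl (fun T => T \in [set T : {set 'I_n} | S \subset T & #|T| == c])); last first.
  by move=> T; rewrite !inE Sa eqxx andbT andbC.
by rewrite sumr_const count_super Sa // mulr_natl.
Qed.
Section S.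
Variables (R : archiRealFieldType) (n : nat) (w : 'I_n -> R).
Hypothesis hw : forall i, 0 <= w i.
Definition M (S : {set 'I_n}) := \big[Num.max/0]_(i in S) w i.
Lemma M_ge0 (S : {set _}) : 0 <= M S.
Proof. by rewrite /M; elim/big_ind: _ => // x y hx hy; rewrite le_max hx. Qed.
Lemma M_ge (S : {set _}) i : i \in S -> w i <= M S.
Proof. by move=> iS; rewrite /M (le_bigmax_cond _ _ iS). Qed.
Lemma M_mono (S T : {set _}) : S \subset T -> M S <= M T.
Proof. move=> ST; apply: bigmax_le; first exact: M_ge0.
by move=> i iS; apply: M_ge; apply: (subsetP ST). Qed.
Lemma M_arg (T : {set _}) i0 : i0 \in T -> exists2 x, x \in T & M T = w x.
Proof. move=> iT; have [x xT e] := @eq_bigmax _ _ _ 0 _ (fun i => i \in T) w iT (fun i _ => hw i).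
by exists x => //; exact: e. Qed.
End S.
Section S2.
Variables (R : archiRealFieldType) (n : nat) (w : 'I_n -> R).
Hypothesis hw : forall i, 0 <= w i.
Lemma P1 (T : {set 'I_n}) a :
  \sum_(S : {set 'I_n} | (S \subset T) && (#|S| == a)) M w S <= 'C(#|T|, a)%:R * M w T.
Proof.
apply: le_trans (_ : \sum_(S : {set 'I_n} | (S \subset T) && (#|S| == a)) M w T <= _).
  by apply: ler_sum => S /andP[ST _]; apply: M_mono.
rewrite (eq_bigl (fun S => S \in [set S : {set 'I_n} | S \subset T & #|S| == a])); last first.
  by move=> S; rewrite !inE.
by rewrite sumr_const cards_draws mulr_natl.
Qed.
Lemma P2 (T : {set 'I_n}) a : (0 < a <= #|T|)%N ->
  'C(#|T|.-1, a.-1)%:R * M w T <= \sum_(S : {set 'I_n} | (S \subset T) && (#|S| == a)) M w S.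
Proof.
move=> /andP[a0 aT].
have [x xT eT] : exists2 x, x \in T & M w T = w x.
  have : (0 < #|T|)%N by lia.
  by move=> /card_gt0P [y yT]; apply: (M_arg hw yT).
rewrite [X in _ <= X](bigID (fun S : {set _} => x \in S)) /=.
rewrite -[leLHS]addr0; apply: lerD; last by apply: sumr_ge0 => S _; apply: M_ge0.
set A := [set S : {set 'I_n} | S \subset T & #|S| == a].
set B := [set S : {set 'I_n} | x \in S].
apply: le_trans (_ : \sum_(S | S \in A :&: B) w x <= _); last first.
  rewrite [X in _ <= X](eq_bigl (fun S => S \in A :&: B)); last by move=> S; rewrite !inE.
  by apply: ler_sum => S; rewrite !inE => /andP[_ xS]; apply: M_ge.
rewrite sumr_const eT mulr_natl.
have cnt : #|A :&: B| = 'C(#|T|.-1, a.-1).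
  have := cardsID B A.
  have -> : A :\: B = [set S : {set 'I_n} | S \subset T :\ x & #|S| == a].
    by apply/setP => S; rewrite !inE subsetD1; case: (S \subset T); case: (x \in S).
  rewrite !cards_draws (cardsD1 x T) xT.
  rewrite add1n; case: (a) a0 => // a1 _ /=; rewrite binS; lia.
by rewrite cnt.
Qed.
End S2.
Section S3.
Variables (R : archiRealFieldType) (n : nat) (w : 'I_n -> R).
Hypothesis hw : forall i, 0 <= w i.
Definition E k := \sum_(S : {set 'I_n} | #|S| == k) M w S.
Lemma E_ge0 k : 0 <= E k.
Proof. by apply: sumr_ge0 => S _; apply: M_ge0. Qed.
Lemma etaE k : eta_nat w k = E k / 'C(n, k)%:R.
Proof. by []. Qed.
Lemma binpos (x y : nat) : (y <= x)%N -> (0 : R) < 'C(x, y)%:R.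
Proof. by move=> h; rewrite ltr0n bin_gt0. Qed.
Lemma pairs a c : (a <= c <= n)%N ->
  ('C(n - a, c - a) * 'C(n, a) = 'C(c, a) * 'C(n, c))%N.
Proof.
move=> h; have := dc (fun _ : {set 'I_n} => (1 : R)) h.
have -> : \sum_(S : {set 'I_n} | #|S| == a) (1:R) = 'C(n, a)%:R.
  rewrite (eq_bigl (fun S => S \in [set S : {set 'I_n} | #|S| == a])); last by move=> S; rewrite !inE.
  by rewrite sumr_const card_draws card_ord.
rewrite (eq_bigr (fun _ => ('C(c, a))%:R : R)); last first.
  move=> T /eqP <-; rewrite (eq_bigl (fun S => S \in [set S : {set 'I_n} | S \subset T & #|S| == a])); last by move=> S; rewrite !inE.
  by rewrite sumr_const cards_draws.
rewrite (eq_bigl (fun S => S \in [set S : {set 'I_n} | #|S| == c])); last by move=> S; rewrite !inE.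
rewrite sumr_const.
rewrite card_draws card_ord -[_ *+ 'C(n, c)]mulr_natr -!natrM.
by move/eqP; rewrite eqr_nat => /eqP; lia.
Qed.
Lemma ineq1 a c : (a <= c <= n)%N ->
  'C(n - a, c - a)%:R * E a <= 'C(c, a)%:R * E c.
Proof.
move=> h; rewrite /E -dc // mulr_sumr; apply: ler_sum => T /eqP Tc.
by rewrite -Tc; apply: P1.
Qed.
Lemma ineq2 a c : (0 < a)%N -> (a <= c <= n)%N ->
  'C(c.-1, a.-1)%:R * E c <= 'C(n - a, c - a)%:R * E a.
Proof.
move=> a0 h; rewrite /E -dc // mulr_sumr; apply: ler_sum => T /eqP Tc.
by rewrite -Tc; apply: P2 => //; rewrite Tc a0; case/andP: h.
Qed.
Lemma eta_mono a c : (a <= c <= n)%N -> eta_nat w a <= eta_nat w c.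
Proof.
move=> h; have /andP[ac cn] := h.
rewrite !etaE.
have pp : (0:R) < 'C(n, a)%:R by apply: binpos; lia.
have qp : (0:R) < 'C(n, c)%:R by apply: binpos; lia.
have sp : (0:R) < 'C(c, a)%:R by apply: binpos; lia.
rewrite ler_pdivrMr // mulrAC ler_pdivlMr //.
rewrite -(ler_pM2l sp).
have e1 := ineq1 h.
have e2 : ('C(n - a, c - a)%:R * 'C(n, a)%:R = 'C(c, a)%:R * 'C(n, c)%:R :> R).
  by rewrite -!natrM pairs.
set x := E a in e1 *; set y := E c in e1 *.
set p := 'C(n, a)%:R in pp e2 *; set q := 'C(n, c)%:R in qp e2 *.
set r := 'C(n - a, c - a)%:R in e1 e2 *; set s := 'C(c, a)%:R in sp e1 e2 *.
have -> : s * (x * q) = p * (r * x).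
  have -> : s * (x * q) = (s * q) * x by ring.
  rewrite -e2; ring.
have -> : s * (y * p) = p * (s * y) by ring.
by rewrite ler_pM2l.
Qed.
Lemma eta_ratio a c : (0 < a)%N -> (a <= c <= n)%N ->
  a%:R * eta_nat w c <= c%:R * eta_nat w a.
Proof.
move=> a0 h; have /andP[ac cn] := h.
rewrite !etaE.
have pp : (0:R) < 'C(n, a)%:R by apply: binpos; lia.
have qp : (0:R) < 'C(n, c)%:R by apply: binpos; lia.
have sp : (0:R) < 'C(c, a)%:R by apply: binpos; lia.
have e1 := ineq2 a0 h.
have e2 : ('C(n - a, c - a)%:R * 'C(n, a)%:R = 'C(c, a)%:R * 'C(n, c)%:R :> R).
  by rewrite -!natrM pairs.
have e3 : (a%:R * 'C(c, a)%:R = c%:R * 'C(c.-1, a.-1)%:R :> R).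
  rewrite -!natrM; congr _%:R; case: (a) a0 => // a1 _.
  by rewrite (mul_bin_diag c a1).
rewrite mulrA ler_pdivrMr // mulrAC mulrA ler_pdivlMr //.
rewrite -(ler_pM2l sp).
set x := E a in e1 *; set y := E c in e1 *.
set p := 'C(n, a)%:R in pp e2 *; set q := 'C(n, c)%:R in qp e2 *.
set r := 'C(n - a, c - a)%:R in e1 e2 *; set s := 'C(c, a)%:R in sp e2 e3 *.
set t := 'C(c.-1, a.-1)%:R in e1 e3 *.
have -> : s * (a%:R * y * p) = c%:R * p * (t * y).
  have -> : s * (a%:R * y * p) = (a%:R * s) * y * p by ring.
  rewrite e3; ring.
have -> : s * (c%:R * q * x) = c%:R * p * (r * x).
  have -> : s * (c%:R * q * x) = c%:R * x * (s * q) by ring.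
  rewrite -e2; ring.
rewrite ler_pM2l //; apply: mulr_gt0 => //; rewrite ltr0n; lia.
Qed.
End S3.
Section Bin.
Variable (R : archiRealFieldType) (p : R).
Lemma bsum0 m : \sum_(k < m.+1) 'C(m, k)%:R * p ^+ k * (1 - p) ^+ (m - k) = 1.
Proof.
have e := exprDn (1 - p) p m; rewrite subrK expr1n in e; rewrite [RHS]e.
by apply: eq_bigr => i _; ring.
Qed.
Lemma bsum1 m : \sum_(k < m.+1) 'C(m, k)%:R * p ^+ k * (1 - p) ^+ (m - k) * k%:R = m%:R * p.
Proof.
case: m => [|m]; first by rewrite big_ord_recl big_ord0 /= mulr0 addr0 mul0r.
rewrite big_ord_recl /= mulr0 add0r.
transitivity (m.+1%:R * p * \sum_(k < m.+1) 'C(m, k)%:R * p ^+ k * (1 - p) ^+ (m - k)); last by rewrite bsum0 mulr1.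
rewrite mulr_sumr.
apply: eq_bigr => i _; rewrite /bump /= add1n subSS.
have e : ('C(m.+1, i.+1) * i.+1 = m.+1 * 'C(m, i))%N by rewrite mulnC -mul_bin_diag.
have e' : ('C(m.+1, i.+1)%:R * i.+1%:R = m.+1%:R * 'C(m, i)%:R :> R) by rewrite -!natrM e.
rewrite exprS.
have -> : 'C(m.+1, i.+1)%:R * (p * p ^+ i) * (1 - p) ^+ (m - i) * i.+1%:R
   = ('C(m.+1, i.+1)%:R * i.+1%:R) * (p * p ^+ i) * (1 - p) ^+ (m - i) :> R by ring.
rewrite e'; ring.
Qed.
End Bin.
Lemma eta_nat_ge0 (R : archiRealFieldType) n (w : 'I_n -> R) k :
  (forall i, 0 <= w i) -> 0 <= eta_nat w k.
Proof. by move=> hw; rewrite etaE divr_ge0 // E_ge0. Qed.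

Theorem lemma4p1 (R : archiRealFieldType) (n : nat) (w : 'I_n -> R)
    (hw : forall i, 0 <= w i) :
  (forall a b : R, 0 <= a -> a <= b -> b <= n%:R -> eta w a <= eta w b) /\
  (forall a h : R, 1 <= a -> 1 <= h -> h <= n%:R / a ->
      eta w (a * h) <= 2 * a * eta w h) /\
  (forall (m : nat) (p : R), 0 <= p <= 1 -> 1 <= m%:R * p -> (m <= n)%N ->
      binom_expect m p (fun k => eta w k%:R) <= 3 * eta w (m%:R * p)).
Proof.
have trle : forall x : R, 0 <= x -> x <= n%:R -> (Num.truncn x <= n)%N.
  by move=> x _ xn; rewrite truncn_le_nat (le_lt_trans xn) // ltr_nat.
split; [|split].
- move=> a b a0 ab bn; rewrite /eta; apply: (eta_mono hw).
  by rewrite le_truncn //= trle // (le_trans a0 ab).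
- move=> a h a1 h1 hn; rewrite /eta.
  have a0 : 0 < a by apply: lt_le_trans a1; rewrite ltr01.
  have h0 : 0 <= h by apply: le_trans h1; rewrite ler01.
  have ahn : a * h <= n%:R by rewrite mulrC -ler_pdivlMr.
  have hah : h <= a * h by rewrite ler_peMl.
  set k := Num.truncn h; set K := Num.truncn (a * h).
  have k1 : (1 <= k)%N by rewrite /k truncn_ge_nat.
  have kn : (k <= n)%N by rewrite trle // (le_trans hah).
  have Kn : (K <= n)%N by rewrite trle // (le_trans h0).
  have ek := eta_nat_ge0 k hw.
  have [Kk | kK] := leqP K k.
    apply: le_trans (eta_mono hw (_ : (K <= k <= n)%N)) _; first by rewrite Kk kn.
    rewrite -[leLHS]mul1r ler_wpM2r //; lra.
  have hk : h < (k.+1)%:R by rewrite -truncn_lt_nat.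
  have Kah : K%:R <= a * h by rewrite truncn_le mulr_ge0 // ltW.
  have r := eta_ratio hw (k1) (_ : (k <= K <= n)%N).
  rewrite (ltnW kK) Kn in r; have {}r := r isT.
  set f := eta_nat w K in r *; set e := eta_nat w k in r ek *.
  have kp : (0 : R) < k%:R by rewrite ltr0n.
  rewrite -(ler_pM2l kp); apply: (le_trans r).
  have : (k.+1%:R : R) <= 2 * k%:R by rewrite -natrM ler_nat; lia.
  rewrite -natr1 => h2.
  rewrite -natr1 in hk.
  have h3 : a * h <= a * (k%:R + 1) by rewrite ler_pM2l // ltW.
  have h4 : K%:R <= 2 * a * k%:R by nra.
  have -> : k%:R * (2 * a * e) = (2 * a * k%:R) * e by ring.
  by rewrite ler_wpM2r.
- move=> m p /andP[p0 p1] mp1 mn; rewrite /binom_expect /eta.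
  have mp0 : 0 <= m%:R * p by apply: le_trans mp1; rewrite ler01.
  have mpm : m%:R * p <= m%:R by rewrite ler_piMr.
  set k := Num.truncn (m%:R * p).
  have k1 : (1 <= k)%N by rewrite /k truncn_ge_nat.
  have km : (k <= m)%N by rewrite /k truncn_le_nat (le_lt_trans mpm) // ltr_nat.
  have hk : m%:R * p < (k.+1)%:R by rewrite -truncn_lt_nat.
  have ek := eta_nat_ge0 k hw.
  have kp : (0 : R) < k%:R by rewrite ltr0n.
  have bnd : forall j, (j <= m)%N -> k%:R * eta_nat w j <= (k%:R + j%:R) * eta_nat w k.
    move=> j jm; have [jk | kj] := leqP j k.
      have := eta_mono hw (_ : (j <= k <= n)%N); rewrite jk (leq_trans km mn) => /(_ isT) e1.
      apply: (le_trans (_ : _ <= k%:R * eta_nat w k)); first by rewrite ler_pM2l.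
      by rewrite ler_wpM2r // lerDl.
    have := eta_ratio hw k1 (_ : (k <= j <= n)%N); rewrite (ltnW kj) (leq_trans jm mn) => /(_ isT) e1.
    by apply: (le_trans e1); rewrite ler_wpM2r // lerDr.
  rewrite -(ler_pM2l kp) mulr_sumr.
  apply: (le_trans (_ : _ <= \sum_(j < m.+1) ('C(m, j)%:R * p ^+ j * (1 - p) ^+ (m - j)) * ((k%:R + j%:R) * eta_nat w k))).
    apply: ler_sum => j _; rewrite natrK mulrCA ler_wpM2l //.
      by rewrite !mulr_ge0 // ?exprn_ge0 // subr_ge0.
    by apply: bnd; rewrite -ltnS.
  have -> : \sum_(j < m.+1) ('C(m, j)%:R * p ^+ j * (1 - p) ^+ (m - j)) * ((k%:R + j%:R) * eta_nat w k)
     = (k%:R * \sum_(j < m.+1) 'C(m, j)%:R * p ^+ j * (1 - p) ^+ (m - j)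
        + \sum_(j < m.+1) 'C(m, j)%:R * p ^+ j * (1 - p) ^+ (m - j) * j%:R) * eta_nat w k.
    rewrite mulr_sumr -big_split mulr_suml /=; apply: eq_bigr => j _; ring.
  rewrite bsum0 bsum1 mulr1.
  set e := eta_nat w k in ek *.
  have : k%:R + m%:R * p <= 3 * k%:R.
    have : (k.+1%:R : R) <= 2 * k%:R by rewrite -natrM ler_nat; lia.
    rewrite -natr1 => h2; lra.
  move=> h3; have -> : k%:R * (3 * e) = (3 * k%:R) * e by ring.
  by rewrite ler_wpM2r.
Qed.
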